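(* For every constant $\beta>0$ and every sequence $x_{1:n}\in\mathcal X^n$ ($n\ge1$), $$R^\beta_S(x_{1:n}) \ge \mathrm{CL}_w(\mathcal A) - m\ln m + \sum_{j\in\mathcal A}\tfrac12\ln\frac{n_j}{2\pi} - \tfrac12\ln n - 0.45\,m - 0.43 .$$
   Context: Let $\mathcal X$ be a finite base alphabet with $D=|\mathcal X|$. For $x_{1:n}\in\mathcal X^n$, let $n_i$ be the number of occurrences of $i$ in $x_{1:n}$, $\mathcal A=\{x_1,\dots,x_n\}$, $m=|\mathcal A|$. For $0\le t\le n$ let $\mathcal A_t=\{x_1,\dots,x_t\}$ ($\mathcal A_0=\emptyset$), $m_t=|\mathcal A_t|$, $n^t_i$ the number of occurrences of $i$ in $x_{1:t}$. New-symbol weights: for each $t$ and $i\in\mathcal X\setminus\mathcal A_t$ a number $w^t_i>0$ with $\sum_{k\in\mathcal X\setminus\mathcal A_t}w^t_k\le 1$. For constant $\beta>0$, $S^\beta(x_{t+1}=i\mid x_{1:t})=n^t_i/(t+\beta)$ if $n^t_i>0$ and $\beta w^t_i/(t+\beta)$ if $n^t_i=0$, and $S^\beta(x_{1:n})=\prod_{t=0}^{n-1}S^\beta(x_{t+1}\mid x_{1:t})$. $\mathrm{CL}_w(\mathcal A):=\sum_{t\in\{0,\dots,n-1\}:\,x_{t+1}\notin\mathcal A_t}\ln(1/w^t_{x_{t+1}})$. Redundancy: $R^\beta_S(x_{1:n}):=\ln\big(n^{-n}\prod_{j\in\mathcal A}n_j^{n_j}\big)-\ln S^\beta(x_{1:n})$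 (the log of the maximum i.i.d. likelihood over $S^\beta(x_{1:n})$). Natural logarithms. *)

(* Defs.v *)
From Stdlib Require Import Reals Lra Lia Arith List.
Import ListNotations.
Open Scope R_scope.

(* Alphabet X = {0,...,D-1}; the sequence x_{1:n} is given by x : nat -> nat,
   with x_{t+1} = x t for t = 0..n-1. *)

Definition Rsum (N : nat) (f : nat -> R) : R :=
  fold_right Rplus 0 (map f (seq 0 N)).
Definition Rprod (N : nat) (f : nat -> R) : R :=
  fold_right Rmult 1 (map f (seq 0 N)).

(* n^t_i : number of occurrences of i in x_{1:t} = x 0, ..., x (t-1) *)
Definition cnt (x : nat -> nat) (t i : nat) : nat :=
  length (filter (fun s => Nat.eqb (x s) i) (seq 0 t)).

Definition inA (x : nat -> nat) (t i : nat) : bool := Nat.ltb 0 (cnt x t i).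

Definition msize (D : nat) (x : nat -> nat) (t : nat) : nat :=
  length (filter (fun j => inA x t j) (seq 0 D)).

(* S^beta(x_{t+1} = i | x_{1:t}) with weights w t i = w^t_i *)
Definition Scond (beta : R) (w : nat -> nat -> R) (x : nat -> nat) (t i : nat) : R :=
  if inA x t i then INR (cnt x t i) / (INR t + beta)
  else beta * w t i / (INR t + beta).

Definition Sprob (beta : R) (w : nat -> nat -> R) (x : nat -> nat) (n : nat) : R :=
  Rprod n (fun t => Scond beta w x t (x t)).

Definition CLw (w : nat -> nat -> R) (x : nat -> nat) (n : nat) : R :=
  Rsum n (fun t => if inA x t (x t) then 0 else ln (1 / w t (x t))).

Definition Redund (D : nat) (beta : R) (w : nat -> nat -> R) (x : nat -> nat) (n : nat) : R :=
  ln (/ (INR n ^ n) *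
      Rprod D (fun j => if inA x n j then INR (cnt x n j) ^ (cnt x n j) else 1))
  - ln (Sprob beta w x n).

(* Main.v *)
Require Import Defs.
From Stdlib Require Import Reals Lra Lia Arith List.
From Coquelicot Require Import Coquelicot.
Open Scope R_scope.
Lemma lnL (x : R) : 0 < x -> 2 * x / (2 + x) <= ln (1 + x).
Proof.
  intros hx.
  set (f := fun y => ln (1 + y) - 2 * y / (2 + y)).
  assert (H : exists c, f x - f 0 = (c^2 / ((1+c)*(2+c)^2)) * (x - 0) /\ 0 < c < x).
  { apply MVT_cor2; [lra|]. intros c hc. apply is_derive_Reals.
    unfold f. auto_derive; [lra|]. field. lra. }
  destruct H as [c [Hc1 Hc2]].
  assert (0 <= c^2 / ((1+c)*(2+c)^2) * (x - 0)).
  { apply Rmult_le_pos; [|lra]. apply Rdiv_le_0_compat. nra. 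
    apply Rmult_lt_0_compat; nra. }
  unfold f in Hc1. replace (1+0) with 1 in Hc1 by ring. rewrite ln_1 in Hc1. lra.
Qed.

Lemma lnU (x : R) : 0 < x -> ln (1 + x) <= x * (2 + x) / (2 * (1 + x)).
Proof.
  intros hx.
  set (f := fun y => y * (2 + y) / (2 * (1 + y)) - ln (1 + y)).
  assert (H : exists c, f x - f 0 = (c^2 / (2*(1+c)^2)) * (x - 0) /\ 0 < c < x).
  { apply MVT_cor2; [lra|]. intros c hc. apply is_derive_Reals.
    unfold f. auto_derive; [lra|]. field. lra. }
  destruct H as [c [Hc1 Hc2]].
  assert (0 <= c^2 / (2*(1+c)^2) * (x - 0)).
  { apply Rmult_le_pos; [|lra]. apply Rdiv_le_0_compat. nra. nra. }
  unfold f in Hc1. replace (1+0) with 1 in Hc1 by ring. rewrite ln_1 in Hc1. lra.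
Qed.

Lemma lndiff (K : R) : 0 < K ->
  2 / (2*K+1) <= ln (K+1) - ln K <= (2*K+1) / (2*K*(K+1)).
Proof.
  intros hK. 
  assert (E : ln (K+1) - ln K = ln (1 + /K)).
  { replace (1 + /K) with ((K+1) * /K) by (field; lra).
    rewrite ln_mult; [|lra|apply Rinv_0_lt_compat; lra]. rewrite ln_Rinv; lra. }
  rewrite E. assert (0 < /K) by (apply Rinv_0_lt_compat; lra).
  split.
  - replace (2 / (2*K+1)) with (2 * /K / (2 + /K)) by (field; lra). apply lnL; auto.
  - replace ((2*K+1) / (2*K*(K+1))) with (/K * (2 + /K) / (2 * (1 + /K))) by (field; lra).
    apply lnU; auto.
Qed.
Lemma ln_0 : ln 0 = 0.
Proof. unfold ln. destruct (Rlt_dec 0 0) as [h|h]; [exfalso; lra|reflexivity]. Qed.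

Lemma ln_le' x y : 0 < x -> x <= y -> ln x <= ln y.
Proof. intros h [h1|h1]; [left; apply ln_increasing; auto| subst; lra]. Qed.

Lemma fold_plus_acc (l : list R) a : fold_right Rplus a l = fold_right Rplus 0 l + a.
Proof. induction l; simpl; [lra|rewrite IHl; lra]. Qed.
Lemma fold_mult_acc (l : list R) a : fold_right Rmult a l = fold_right Rmult 1 l * a.
Proof. induction l; simpl; [lra|rewrite IHl; ring]. Qed.

Lemma Rsum_0 f : Rsum 0 f = 0. Proof. reflexivity. Qed.
Lemma Rsum_S N f : Rsum (S N) f = Rsum N f + f N.
Proof. unfold Rsum. rewrite seq_S, map_app, fold_right_app. simpl.
  rewrite fold_plus_acc. f_equal; ring. Qed.
Lemma Rprod_S N f : Rprod (S N) f = Rprod N f * f N.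
Proof. unfold Rprod. rewrite seq_S, map_app, fold_right_app. simpl.
  rewrite fold_mult_acc. f_equal; ring. Qed.

Lemma Rsum_ext N f g : (forall i, (i < N)%nat -> f i = g i) -> Rsum N f = Rsum N g.
Proof. induction N; intros H; [reflexivity|]. rewrite !Rsum_S, IHN, H; auto. Qed.
Lemma Rsum_le N f g : (forall i, (i < N)%nat -> f i <= g i) -> Rsum N f <= Rsum N g.
Proof. induction N; intros H; [rewrite !Rsum_0; lra|]. rewrite !Rsum_S.
  assert (f N <= g N) by (apply H; lia). assert (Rsum N f <= Rsum N g) by (apply IHN; auto). lra. Qed.
Lemma Rsum_plus N f g : Rsum N (fun i => f i + g i) = Rsum N f + Rsum N g.
Proof. induction N; [rewrite !Rsum_0; lra|]. rewrite !Rsum_S, IHN; ring. Qed.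
Lemma Rsum_scal N c f : Rsum N (fun i => c * f i) = c * Rsum N f.
Proof. induction N; [rewrite !Rsum_0; lra|]. rewrite !Rsum_S, IHN; ring. Qed.
Lemma Rsum_opp N f : Rsum N (fun i => - f i) = - Rsum N f.
Proof. induction N; [rewrite !Rsum_0; lra|]. rewrite !Rsum_S, IHN; ring. Qed.
Lemma Rsum_const N c : Rsum N (fun _ => c) = INR N * c.
Proof. induction N; [rewrite !Rsum_0; simpl; lra|]. rewrite !Rsum_S, IHN, S_INR; ring. Qed.
Lemma Rsum_update D a f g : (a < D)%nat -> (forall j, (j < D)%nat -> j <> a -> g j = f j) ->
  Rsum D g = Rsum D f + (g a - f a).
Proof. induction D; intros ha H; [lia|]. rewrite !Rsum_S.
  destruct (Nat.eq_dec a D) as [->|hne].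
  - rewrite (Rsum_ext D g f); [ring|]. intros; apply H; lia.
  - rewrite IHD; [|lia|intros; apply H; lia]. rewrite (H D); [ring|lia|auto]. Qed.
Lemma Rsum_ge_first n f : (1 <= n)%nat -> (forall i, (i < n)%nat -> 0 <= f i) -> f 0%nat <= Rsum n f.
Proof. intros hn H. induction n; [lia|]. destruct n.
  - rewrite Rsum_S, Rsum_0; lra.
  - rewrite Rsum_S. assert (0 <= f (S n)) by (apply H; lia).
    assert (f 0%nat <= Rsum (S n) f) by (apply IHn; [lia|intros; apply H; lia]). lra. Qed.

Lemma ln_Rprod N f : (forall i, (i < N)%nat -> 0 < f i) -> ln (Rprod N f) = Rsum N (fun i => ln (f i)).
Proof. induction N; intros H. - unfold Rprod; simpl; apply ln_1.
  - assert (Hp : 0 < Rprod N f).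
    { clear IHN. induction N. unfold Rprod; simpl; lra. rewrite Rprod_S.
      apply Rmult_lt_0_compat; [apply IHN; intros; apply H; lia| apply H; lia]. }
    rewrite Rprod_S, Rsum_S, ln_mult, IHN; auto. Qed.

Lemma cnt_S x t i : cnt x (S t) i = (cnt x t i + (if Nat.eqb (x t) i then 1 else 0))%nat.
Proof. unfold cnt. rewrite seq_S, filter_app, length_app. simpl.
  destruct (Nat.eqb (x t) i); simpl; lia. Qed.

Lemma inA_false x t i : inA x t i = false -> cnt x t i = 0%nat.
Proof. unfold inA. intro h. apply Nat.ltb_ge in h. lia. Qed.
Lemma inA_true x t i : inA x t i = true -> (1 <= cnt x t i)%nat.
Proof. unfold inA. intro h. apply Nat.ltb_lt in h. lia. Qed.
Lemma inA_S_self x t : inA x (S t) (x t) = true.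
Proof. unfold inA. rewrite cnt_S, Nat.eqb_refl. apply Nat.ltb_lt. lia. Qed.
Lemma cnt_S_other x t j : j <> x t -> cnt x (S t) j = cnt x t j.
Proof. intro h. rewrite cnt_S. destruct (Nat.eqb_spec (x t) j); [congruence|lia]. Qed.
Lemma inA_S_other x t j : j <> x t -> inA x (S t) j = inA x t j.
Proof. intro h. unfold inA. rewrite cnt_S_other; auto. Qed.

Lemma msize_sum D x t : INR (msize D x t) = Rsum D (fun j => if inA x t j then 1 else 0).
Proof. unfold msize. induction D; [reflexivity|]. rewrite seq_S, filter_app, length_app, Rsum_S, plus_INR, IHD.
  simpl. destruct (inA x t D); simpl; lra. Qed.

Section Comb.
Variables (D n : nat) (x : nat -> nat).
Hypothesis hx : forall t, (t < n)%nat -> (x t < D)%nat.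

Lemma I1 t : (t <= n)%nat -> Rsum D (fun j => INR (cnt x t j)) = INR t.
Proof. induction t; intro ht.
  - rewrite (Rsum_ext _ _ (fun _ => 0)); [rewrite Rsum_const; simpl; lra|]. intros; reflexivity.
  - rewrite (Rsum_update D (x t) (fun j => INR (cnt x t j))).
    + rewrite IHt by lia. rewrite cnt_S, Nat.eqb_refl, plus_INR, (S_INR t). change (INR 1) with 1. lra.
    + apply hx; lia.
    + intros j _ hj. rewrite cnt_S_other; auto.
Qed.

Lemma I2 t : (t <= n)%nat -> Rsum D (fun j => if inA x t j then 1 else 0) =
   Rsum t (fun s => if inA x s (x s) then 0 else 1).
Proof. induction t; intro ht.
  - rewrite (Rsum_ext _ _ (fun _ => 0)); [rewrite Rsum_const; simpl; rewrite Rsum_0; lra|]. intros; reflexivity.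
  - rewrite (Rsum_update D (x t) (fun j => if inA x t j then 1 else 0)).
    + rewrite IHt by lia. rewrite Rsum_S, inA_S_self. destruct (inA x t (x t)); lra.
    + apply hx; lia.
    + intros j _ hj. rewrite inA_S_other; auto.
Qed.

Definition Lf (k : nat) : R := Rsum k (fun t => ln (INR t)).

Lemma I3 t : (t <= n)%nat -> Rsum D (fun j => Lf (cnt x t j)) =
   Rsum t (fun s => ln (INR (cnt x s (x s)))).
Proof. induction t; intro ht.
  - rewrite (Rsum_ext _ _ (fun _ => 0)); [rewrite Rsum_const; simpl; rewrite Rsum_0; lra|]. intros; reflexivity.
  - rewrite (Rsum_update D (x t) (fun j => Lf (cnt x t j))).
    + rewrite IHt by lia. rewrite Rsum_S, cnt_S, Nat.eqb_refl, Nat.add_1_r. unfold Lf at 1. rewrite Rsum_S. unfold Lf. lra.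
    + apply hx; lia.
    + intros j _ hj. rewrite cnt_S_other; auto.
Qed.
End Comb.

Lemma ualg (K0 L a b : R) : (K0+1) * b - (L + a) - / 2 * b - (K0+1)
       = (K0 * a - L - / 2 * a - K0) + ((K0 + /2) * (b - a) - 1).
Proof. field. Qed.
Lemma u_bounds j : let K := INR (S j) in
  -1 <= K * ln K - Lf (S j) - / 2 * ln K - K <= -3/4 - / (4 * K).
Proof.
  induction j; intro K. 
  - unfold K, Lf. rewrite Rsum_S, Rsum_0. simpl INR. rewrite ln_0, ln_1. lra.
  - cbv zeta in IHj. set (K0 := INR (S j)) in *.
    assert (hK0 : 0 < K0) by (unfold K0; apply lt_0_INR; lia).
    assert (EK : K = K0 + 1) by (unfold K, K0; rewrite (S_INR (S j)); reflexivity).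
    assert (EL : Lf (S (S j)) = Lf (S j) + ln K0) by (unfold Lf; rewrite Rsum_S; reflexivity).
    rewrite EL, EK. destruct (lndiff K0 hK0) as [d1 d2].
    set (d := ln (K0 + 1) - ln K0) in *. clearbody K0.
    assert (a1 : (K0 + /2) * (2 / (2*K0+1)) = 1) by (field; lra).
    assert (a2 : (K0 + /2) * ((2*K0+1) / (2*K0*(K0+1))) = 1 + / (4 * K0 * (K0+1))) by (field; lra).
    assert (b1 : (K0 + /2) * (2 / (2*K0+1)) <= (K0 + /2) * d) by (apply Rmult_le_compat_l; lra).
    assert (b2 : (K0 + /2) * d <= (K0 + /2) * ((2*K0+1) / (2*K0*(K0+1)))) by (apply Rmult_le_compat_l; lra).
    assert (a3 : - / (4 * K0) + / (4 * K0 * (K0+1)) = - / (4 * (K0+1))) by (field; lra).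
    assert (E : (K0+1) * ln (K0+1) - (Lf (S j) + ln K0) - / 2 * ln (K0+1) - (K0+1)
       = (K0 * ln K0 - Lf (S j) - / 2 * ln K0 - K0) + ((K0 + /2) * d - 1)) by (unfold d; apply ualg).
    rewrite E. lra.
Qed.

Lemma S1 k : Lf k <= INR k * ln (INR k) - INR k - / 2 * ln (INR k) + 1.
Proof. destruct k. - unfold Lf. rewrite Rsum_0. simpl. rewrite ln_0. lra.
  - pose proof (u_bounds k) as H. cbv zeta in H. lra. Qed.

Lemma S2 k : (1 <= k)%nat -> INR k * ln (INR k) - INR k - / 2 * ln (INR k) + 3/4 <= Lf k.
Proof. intro hk. destruct k; [lia|].
  pose proof (u_bounds k) as H. cbv zeta in H. assert (0 < / (4 * INR (S k))).
  { apply Rinv_0_lt_compat. assert (0 < INR (S k)) by (apply lt_0_INR; lia). lra. }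
  lra. Qed.

Lemma split_beta beta m n : 0 < beta -> (1 <= m)%nat -> (m <= n)%nat ->
  INR m * ln beta + Lf n - Lf m <= Rsum n (fun t => ln (INR t + beta)).
Proof.
  intros hb hm hmn. replace n with (m + (n - m))%nat by lia. generalize (n - m)%nat as d.
  induction d.
  - rewrite Nat.add_0_r. rewrite <- Rsum_const.
    assert (Rsum m (fun _ => ln beta) <= Rsum m (fun t => ln (INR t + beta))).
    { apply Rsum_le. intros i _. apply ln_le'; auto. pose proof (pos_INR i). lra. }
    lra.
  - rewrite Nat.add_succ_r. unfold Lf in *. rewrite !Rsum_S.
    assert (ln (INR (m + d)) <= ln (INR (m + d) + beta)).
    { apply ln_le'. apply lt_0_INR; lia. lra. }
    lra.
Qed.

Lemma Rprod_pos N f : (forall i, (i < N)%nat -> 0 < f i) -> 0 < Rprod N f.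
Proof. induction N; intros H. unfold Rprod; simpl; lra. rewrite Rprod_S.
  apply Rmult_lt_0_compat; [apply IHN; intros; apply H; lia| apply H; lia]. Qed.

Theorem theorem2 (D : nat) (beta : R) (w : nat -> nat -> R) (x : nat -> nat) (n : nat)
  (hbeta : 0 < beta)
  (hn : (1 <= n)%nat)
  (hx : forall t, (t < n)%nat -> (x t < D)%nat)
  (hwpos : forall t i, (t < n)%nat -> (i < D)%nat -> inA x t i = false -> 0 < w t i)
  (hwsum : forall t, (t < n)%nat ->
     Rsum D (fun k => if inA x t k then 0 else w t k) <= 1) :
  Redund D beta w x n >=
    CLw w x n
    - INR (msize D x n) * ln (INR (msize D x n))
    + Rsum D (fun j => if inA x n j then / 2 * ln (INR (cnt x n j) / (2 * PI)) else 0)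
    - / 2 * ln (INR n)
    - 45 / 100 * INR (msize D x n)
    - 43 / 100.
Proof.
  set (m := msize D x n).
  assert (HM : INR m = Rsum n (fun s => if inA x s (x s) then 0 else 1))
    by (unfold m; rewrite msize_sum; apply (I2 D n x hx); auto).
  assert (HM2 : INR m = Rsum D (fun j => if inA x n j then 1 else 0)) by apply msize_sum.
  assert (Hmn : (m <= n)%nat).
  { apply INR_le. rewrite HM. rewrite <- (Rmult_1_r (INR n)), <- Rsum_const.
    apply Rsum_le; intros; destruct (inA x i (x i)); lra. }
  assert (Hm1 : (1 <= m)%nat).
  { apply INR_le. rewrite HM. change (INR 1) with 1.
    eapply Rle_trans; [|apply Rsum_ge_first; auto].
    - unfold inA, cnt. simpl. lra.
    - intros; destruct (inA x i (x i)); lra. }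
  assert (Hpos : forall t, (t < n)%nat -> 0 < Scond beta w x t (x t)).
  { intros t ht. assert (0 < INR t + beta) by (pose proof (pos_INR t); lra).
    unfold Scond. destruct (inA x t (x t)) eqn:E.
    - apply Rdiv_lt_0_compat; auto. apply lt_0_INR. pose proof (inA_true _ _ _ E); lia.
    - apply Rdiv_lt_0_compat; auto. apply Rmult_lt_0_compat; auto. }
  assert (HS : ln (Sprob beta w x n) = Rsum n (fun t => ln (INR (cnt x t (x t)))
        + ln beta * (if inA x t (x t) then 0 else 1)
        + (if inA x t (x t) then 0 else ln (w t (x t))) + - ln (INR t + beta))).
  { unfold Sprob. rewrite ln_Rprod by auto. apply Rsum_ext. intros t ht.
    assert (0 < INR t + beta) by (pose proof (pos_INR t); lra).
    unfold Scond. destruct (inA x t (x t)) eqn:E.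
    - unfold Rdiv. rewrite ln_mult; [|apply lt_0_INR; pose proof (inA_true _ _ _ E); lia
        |apply Rinv_0_lt_compat; lra].
      rewrite ln_Rinv by lra. ring.
    - rewrite (inA_false _ _ _ E). simpl INR. rewrite ln_0.
      assert (0 < w t (x t)) by (apply hwpos; auto).
      unfold Rdiv. rewrite ln_mult; [|apply Rmult_lt_0_compat; auto|apply Rinv_0_lt_compat; lra].
      rewrite ln_mult by auto. rewrite ln_Rinv by lra. ring. }
  rewrite !Rsum_plus, Rsum_scal, Rsum_opp in HS.
  rewrite <- (I3 D n x hx n (le_n n)) in HS. rewrite <- HM in HS.
  assert (HCL : CLw w x n = - Rsum n (fun t => if inA x t (x t) then 0 else ln (w t (x t)))).
  { unfold CLw. rewrite <- Rsum_opp. apply Rsum_ext. intros t ht.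
    destruct (inA x t (x t)) eqn:E; [lra|]. unfold Rdiv. rewrite Rmult_1_l, ln_Rinv; auto. }
  assert (Hnpos : 0 < INR n) by (apply lt_0_INR; lia).
  assert (HP : ln (/ (INR n ^ n) * Rprod D (fun j => if inA x n j then INR (cnt x n j) ^ (cnt x n j) else 1))
     = - (INR n * ln (INR n)) + Rsum D (fun j => INR (cnt x n j) * ln (INR (cnt x n j)))).
  { assert (Hpj : forall j, (j < D)%nat -> 0 < (if inA x n j then INR (cnt x n j) ^ (cnt x n j) else 1)).
    { intros j hj. destruct (inA x n j) eqn:E; [|lra]. apply pow_lt. apply lt_0_INR.
      pose proof (inA_true _ _ _ E); lia. }
    rewrite ln_mult; [|apply Rinv_0_lt_compat, pow_lt; auto|apply Rprod_pos; auto].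
    rewrite ln_Rinv by (apply pow_lt; auto). rewrite ln_pow by auto.
    rewrite ln_Rprod by auto. f_equal. apply Rsum_ext. intros j hj.
    destruct (inA x n j) eqn:E.
    - apply ln_pow. apply lt_0_INR. pose proof (inA_true _ _ _ E); lia.
    - rewrite (inA_false _ _ _ E), ln_1. simpl. ring. }
  assert (Hj : Rsum D (fun j => (if inA x n j then / 2 * ln (INR (cnt x n j) / (2 * PI)) else 0)
                 + INR (cnt x n j) + - (if inA x n j then 1 else 0))
            <= Rsum D (fun j => INR (cnt x n j) * ln (INR (cnt x n j)) + - Lf (cnt x n j))).
  { apply Rsum_le. intros j hj. destruct (inA x n j) eqn:E.
    - pose proof (S1 (cnt x n j)).
      assert (0 < INR (cnt x n j)) by (apply lt_0_INR; pose proof (inA_true _ _ _ E); lia).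
      assert (H2pi : 0 <= ln (2 * PI)).
      { rewrite <- ln_1. apply ln_le'; [lra|]. pose proof PI2_1. lra. }
      assert (0 < 2 * PI) by (pose proof PI_RGT_0; lra).
      unfold Rdiv. rewrite ln_mult; [|auto|apply Rinv_0_lt_compat; auto]. rewrite ln_Rinv by auto.
      lra.
    - rewrite (inA_false _ _ _ E). simpl INR. unfold Lf. rewrite Rsum_0. lra. }
  rewrite !Rsum_plus, !Rsum_opp, <- HM2, (I1 D n x hx n (le_n n)) in Hj.
  pose proof (S2 n hn) as HS2. pose proof (S1 m) as HS1.
  assert (HlnM : 0 <= ln (INR m)).
  { rewrite <- ln_1. apply ln_le'; [lra|]. change 1 with (INR 1). apply le_INR; auto. }
  pose proof (split_beta beta m n hbeta Hm1 Hmn) as Hsb.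
  unfold Redund. rewrite HP, HS, HCL.
  assert (ln beta * INR m = INR m * ln beta) by ring.
  pose proof (pos_INR m). lra.
Qed.
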